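(* Let $\mathbf{u}_j\in c_0$, $j\in\mathbb{N}_m$, be linearly independent, $\mathbf{y}\in\mathbb{R}^m$, $\mathcal{L}(\mathbf{x}):=[\langle\mathbf{u}_j,\mathbf{x}\rangle:j\in\mathbb{N}_m]$ for $\mathbf{x}\in\ell_1(\mathbb{N})$, and $\mathcal{L}^*(\mathbf{c}):=\sum_{j\in\mathbb{N}_m}c_j\mathbf{u}_j$ for $\mathbf{c}\in\mathbb{R}^m$. Then $\hat{\mathbf{x}}\in\ell_1(\mathbb{N})$ is a solution of $\inf\{\|\mathbf{x}\|_1+\iota_{\mathbf{y}}(\mathcal{L}(\mathbf{x})):\mathbf{x}\in\ell_1(\mathbb{N})\}$ (equivalently, of $\inf\{\|\mathbf{x}\|_1:\mathbf{x}\in\ell_1(\mathbb{N}),\ \mathcal{L}(\mathbf{x})=\mathbf{y}\}$) if and only if there exists $\mathbf{c}\in\mathbb{R}^m$ such that $$\mathbf{c}=\mathrm{prox}_{\iota_{\mathbf{y}}^*}(\mathbf{c}+\mathcal{L}(\hat{\mathbf{x}}))\quad\text{and}\quad \hat{\mathbf{x}}=\mathrm{prox}_{\|\cdot\|_1,\ell_2(\mathbb{N}),\mathcal{T}_0}\big(\hat{\mathbf{x}}-\mathcal{S}\mathcal{L}^*(\mathbf{c})\big).$$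
   Context: $\ell_1(\mathbb{N})$, $\ell_2(\mathbb{N})$ are the usual sequence spaces; $c_0$ is the space of real sequences tending to $0$ with $\|\mathbf{u}\|_\infty=\sup_j|u_j|$; $\langle\mathbf{u},\mathbf{x}\rangle:=\sum_ju_jx_j$; $\mathbb{N}_m:=\{1,\dots,m\}$. $\iota_{\mathbf{y}}:\mathbb{R}^m\to\mathbb{R}\cup\{+\infty\}$ is $0$ at $\mathbf{y}$ and $+\infty$ elsewhere; its convex conjugate is $\iota_{\mathbf{y}}^*(\mathbf{c})=\langle\mathbf{y},\mathbf{c}\rangle_{\mathbb{R}^m}$. For a convex $\psi:\mathbb{R}^m\to\mathbb{R}\cup\{+\infty\}$, $\mathrm{prox}_\psi(\mathbf{a}):=\arg\min\{\frac12\|\mathbf{a}-\mathbf{c}\|_{\mathbb{R}^m}^2+\psi(\mathbf{c}):\mathbf{c}\in\mathbb{R}^m\}$ (so $\mathrm{prox}_{\iota_{\mathbf{y}}^*}(\mathbf{a})=\mathbf{a}-\mathbf{y}$). $\mathcal{T}_0:\ell_1(\mathbb{N})\to\ell_2(\mathbb{N})$ is the inclusion map, and $\mathrm{prox}_{\|\cdot\|_1,\ell_2(\mathbb{N}),\mathcal{T}_0}(\mathbf{x}):=\arg\min\{\frac12\|\mathbf{x}-\mathbf{z}\|_2^2+\|\mathbf{z}\|_1:\mathbf{z}\in\ell_1(\mathbb{N})\}=(\max\{|x_j|-1,0\}\,\mathrm{sign}(x_j):j\in\mathbb{N})$. For $\mathbf{u}\in c_0$, $\mathbb{N}(\mathbf{u}):=\{j:|u_j|=\|\mathbf{u}\|_\infty\}$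 and the truncation $\mathcal{S}(\mathbf{u})$ is the sequence equal to $u_j$ for $j\in\mathbb{N}(\mathbf{u})$ and $0$ otherwise. *)

(* Defs.v *)
From Stdlib Require Import Reals ClassicalEpsilon.
From Coquelicot Require Import Coquelicot.
Open Scope R_scope.

(* Real sequences indexed by nat (index 0 plays the role of 1). *)
Definition seqR := nat -> R.

(* Vectors of R^m are represented by nat -> R, only components j < m matter. *)
Fixpoint fsum (m : nat) (f : nat -> R) : R :=
  match m with O => 0 | S k => fsum k f + f k end.

Definition in_l1 (x : seqR) : Prop := ex_series (fun j => Rabs (x j)).
Definition in_c0 (u : seqR) : Prop := is_lim_seq u 0.

Definition norm1 (x : seqR) : R := Series (fun j => Rabs (x j)).
Definition norm2sq (x : seqR) : R := Series (fun j => (x j) ^ 2).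
Definition inner (u x : seqR) : R := Series (fun j => u j * x j).

Definition norm_inf (u : seqR) : R := real (Sup_seq (fun j => Rabs (u j))).
Definition trunc (u : seqR) : seqR :=
  fun j => if Req_EM_T (Rabs (u j)) (norm_inf u) then u j else 0.

Definition Lop (m : nat) (u : nat -> seqR) (x : seqR) : nat -> R :=
  fun j => inner (u j) x.
Definition Ladj (m : nat) (u : nat -> seqR) (c : nat -> R) : seqR :=
  fun k => fsum m (fun j => c j * u j k).

Definition lin_indep (m : nat) (u : nat -> seqR) : Prop :=
  forall c : nat -> R, (forall k, Ladj m u c k = 0) ->
    forall j, (j < m)%nat -> c j = 0.

Definition eqRm (m : nat) (a b : nat -> R) : Prop :=
  forall j, (j < m)%nat -> a j = b j.

Definition iota_y (m : nat) (y a : nat -> R) : Rbar :=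
  match excluded_middle_informative (eqRm m a y) with
  | left _ => Finite 0 | right _ => p_infty end.
Definition iota_y_conj (m : nat) (y c : nat -> R) : R :=
  fsum m (fun j => y j * c j).

Definition objective (m : nat) (u : nat -> seqR) (y : nat -> R) (x : seqR) : Rbar :=
  Rbar_plus (Finite (norm1 x)) (iota_y m y (Lop m u x)).

Definition is_solution (m : nat) (u : nat -> seqR) (y : nat -> R) (xh : seqR) : Prop :=
  in_l1 xh /\ forall x, in_l1 x -> Rbar_le (objective m u y xh) (objective m u y x).

Definition is_prox_Rm (m : nat) (psi : (nat -> R) -> R) (a c : nat -> R) : Prop :=
  forall d : nat -> R,
    / 2 * fsum m (fun j => (a j - c j) ^ 2) + psi c
    <= / 2 * fsum m (fun j => (a j - d j) ^ 2) + psi d.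

Definition is_prox_l1 (x z : seqR) : Prop :=
  in_l1 z /\ forall w, in_l1 w ->
    / 2 * norm2sq (fun j => x j - z j) + norm1 z
    <= / 2 * norm2sq (fun j => x j - w j) + norm1 w.

(* Main.v *)
Require Import Defs.
From Stdlib Require Import Reals.
From Coquelicot Require Import Coquelicot.

From Stdlib Require Import Lra Lia Psatz ClassicalEpsilon FunctionalExtensionality.
Open Scope R_scope.
Definition bump (k:nat) (a:R) : nat -> R := fun j => if Nat.eqb j k then a else 0.

Lemma sum_n_bump k a n : sum_n (bump k a) n = if Nat.leb k n then a else 0.
Proof.
  induction n.
  - rewrite sum_O. unfold bump. destruct k; simpl; reflexivity.
  - rewrite sum_Sn, IHn. unfold bump.
    destruct (Nat.leb_spec k n); destruct (Nat.eqb_spec (S n) k);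
    destruct (Nat.leb_spec k (S n)); try lia; unfold plus; simpl; lra.
Qed.

Lemma is_series_bump k a : is_series (bump k a) a.
Proof.
  change (is_lim_seq (sum_n (bump k a)) a).
  apply is_lim_seq_ext_loc with (fun _ => a); [|apply is_lim_seq_const].
  exists k. intros n Hn. rewrite sum_n_bump.
  apply Nat.leb_le in Hn. rewrite Hn. reflexivity.
Qed.

Lemma Series_bump k a : Series (bump k a) = a.
Proof. apply is_series_unique, is_series_bump. Qed.
Lemma ex_series_bump k a : ex_series (bump k a).
Proof. exists a; apply is_series_bump. Qed.

Lemma Series_zero : Series (fun _ => 0) = 0.
Proof. transitivity (Series (bump 0 0)); [apply Series_ext; intro n; unfold bump; destruct (n =? 0)%nat; reflexivity| apply Series_bump]. Qed.

Lemma ex_series_zero : ex_series (fun _ : nat => 0).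
Proof. exists 0. apply (is_series_ext (bump 0 0)). intro n; unfold bump; destruct (n =? 0)%nat; reflexivity. apply is_series_bump. Qed.

Lemma Series_nonneg a : (forall n, 0 <= a n) -> ex_series a -> 0 <= Series a.
Proof. intros H E. rewrite <- Series_zero. apply Series_le; auto. intro n; split; [lra| auto]. Qed.

Lemma ex_series_R_le (a b : nat -> R) : (forall n, Rabs (a n) <= b n) -> ex_series b -> ex_series a.
Proof. intros H E. apply (@ex_series_le R_AbsRing R_CompleteNormedModule a b); auto. Qed.

Lemma ex_series_plusR a b : ex_series a -> ex_series b -> ex_series (fun n => a n + b n).
Proof. intros; apply (ex_series_plus a b); auto. Qed.
Lemma ex_series_scalR c a : ex_series a -> ex_series (fun n => c * a n).
Proof. intros; apply (ex_series_scal_l c a); auto. Qed.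

Lemma ex_series_extR (a b : nat -> R) : (forall n, a n = b n) -> ex_series a -> ex_series b.
Proof. apply (@ex_series_ext R_AbsRing R_NormedModule). Qed.

Lemma ex_series_minusR a b : ex_series a -> ex_series b -> ex_series (fun n => a n - b n).
Proof. intros. apply (ex_series_extR (fun n => a n + (-1) * b n)). intro; ring.
  apply ex_series_plusR; auto. apply ex_series_scalR; auto. Qed.

Lemma term_le_Series a k : (forall n, 0 <= a n) -> ex_series a -> a k <= Series a.
Proof.
  intros H E.
  assert (Series a = Series (fun n => a n - bump k (a k) n) + a k).
  { rewrite Series_minus; auto. rewrite Series_bump. ring. apply ex_series_bump. }
  rewrite H0. assert (0 <= Series (fun n => a n - bump k (a k) n)); [|lra].
  apply Series_nonneg. intro n; unfold bump; destruct (Nat.eqb n k) eqn:Ek.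
  apply Nat.eqb_eq in Ek; subst; lra. specialize (H n); lra.
  apply ex_series_minusR; auto. apply ex_series_bump.
Qed.

Lemma ex_series_shift (a : nat -> R) N : ex_series (fun k => a (N + k)%nat) -> ex_series a.
Proof. intro H. apply (@ex_series_incr_n R_AbsRing R_NormedModule a N). exact H. Qed.
Lemma ex_series_shift' (a : nat -> R) N : ex_series a -> ex_series (fun k => a (N + k)%nat).
Proof. intro H. apply (@ex_series_incr_n R_AbsRing R_NormedModule a N). exact H. Qed.

Lemma c0_eventually v M : in_c0 v -> 0 < M -> exists N, forall n, (N <= n)%nat -> Rabs (v n) < M.
Proof.
  intros H HM. apply is_lim_seq_spec in H. destruct (H (mkposreal M HM)) as [N HN].
  exists N. intros n Hn. specialize (HN n Hn). simpl in HN. rewrite Rminus_0_r in HN. exact HN.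
Qed.

Lemma c0_l1_ex v x : in_c0 v -> in_l1 x -> ex_series (fun k => v k * x k).
Proof.
  intros Hv Hx. destruct (c0_eventually v 1 Hv) as [N HN]; [lra|].
  apply ex_series_shift with N. apply ex_series_R_le with (fun k => Rabs (x (N+k)%nat)).
  intro n. rewrite Rabs_mult. specialize (HN (N+n)%nat ltac:(lia)).
  assert (0 <= Rabs (x (N+n)%nat)) by apply Rabs_pos.
  assert (0 <= Rabs (v (N+n)%nat)) by apply Rabs_pos. nra.
  apply (ex_series_shift' (fun k => Rabs (x k))). exact Hx.
Qed.

Lemma l1_comb a x b z : in_l1 x -> in_l1 z -> in_l1 (fun k => a * x k + b * z k).
Proof.
  intros Hx Hz. unfold in_l1. apply ex_series_R_le with (fun k => Rabs a * Rabs (x k) + Rabs b * Rabs (z k)).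
  intro n. rewrite Rabs_Rabsolu. eapply Rle_trans. apply Rabs_triang. rewrite !Rabs_mult. lra.
  apply ex_series_plusR; apply ex_series_scalR; auto.
Qed.

Lemma norm1_nonneg x : in_l1 x -> 0 <= norm1 x.
Proof. intro H. apply Series_nonneg; auto. intro; apply Rabs_pos. Qed.

Lemma norm1_comb_le a x b z : 0 <= a -> 0 <= b -> in_l1 x -> in_l1 z ->
  norm1 (fun k => a * x k + b * z k) <= a * norm1 x + b * norm1 z.
Proof.
  intros Ha Hb Hx Hz. unfold norm1.
  rewrite <- (Series_scal_l a), <- (Series_scal_l b), <- Series_plus.
  apply Series_le. intro n; split. apply Rabs_pos.
  eapply Rle_trans. apply Rabs_triang. rewrite !Rabs_mult, (Rabs_right a), (Rabs_right b); lra.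
  apply ex_series_plusR; apply ex_series_scalR; auto.
  apply ex_series_scalR; auto. apply ex_series_scalR; auto.
Qed.

Lemma norm1_scal a x : norm1 (fun k => a * x k) = Rabs a * norm1 x.
Proof. unfold norm1. rewrite <- Series_scal_l. apply Series_ext. intro; apply Rabs_mult. Qed.

Lemma norm1_zero : norm1 (fun _ => 0) = 0.
Proof. unfold norm1. transitivity (Series (fun _ => 0)); [apply Series_ext; intro; apply Rabs_R0|apply Series_zero]. Qed.

Lemma l1_zero : in_l1 (fun _ => 0).
Proof. unfold in_l1. apply (ex_series_extR (fun _ => 0)). intro; rewrite Rabs_R0; auto. apply ex_series_zero. Qed.

Lemma inner_comb v a x b z : in_c0 v -> in_l1 x -> in_l1 z ->
  inner v (fun k => a * x k + b * z k) = a * inner v x + b * inner v z.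
Proof.
  intros Hv Hx Hz. unfold inner. rewrite <- (Series_scal_l a), <- (Series_scal_l b), <- Series_plus.
  apply Series_ext. intro; ring.
  apply ex_series_scalR, c0_l1_ex; auto. apply ex_series_scalR, c0_l1_ex; auto.
Qed.

Lemma inner_zero v : inner v (fun _ => 0) = 0.
Proof. unfold inner. transitivity (Series (fun _ => 0)); [apply Series_ext; intro; ring|apply Series_zero]. Qed.

Lemma l1_bump k a : in_l1 (bump k a).
Proof. unfold in_l1. apply (ex_series_extR (bump k (Rabs a))).
  intro n; unfold bump; destruct (n =? k)%nat; auto. rewrite Rabs_R0; auto. apply ex_series_bump. Qed.

Lemma norm1_bump k a : norm1 (bump k a) = Rabs a.
Proof. unfold norm1. rewrite <- (Series_bump k (Rabs a)). apply Series_ext.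
  intro n; unfold bump; destruct (n =? k)%nat; auto. apply Rabs_R0. Qed.

Lemma inner_bump v k a : inner v (bump k a) = v k * a.
Proof. unfold inner. rewrite <- (Series_bump k (v k * a)). apply Series_ext.
  intro n; unfold bump; destruct (Nat.eqb_spec n k); subst; auto; ring. Qed.

Lemma fsum_ext n f g : (forall j, (j < n)%nat -> f j = g j) -> fsum n f = fsum n g.
Proof. induction n; simpl; intros; auto. rewrite IHn, H; auto. Qed.
Lemma fsum_lin n a f b g : fsum n (fun j => a * f j + b * g j) = a * fsum n f + b * fsum n g.
Proof. induction n; simpl. ring. rewrite IHn; ring. Qed.
Lemma fsum_le n f g : (forall j, (j < n)%nat -> f j <= g j) -> fsum n f <= fsum n g.
Proof. induction n; simpl; intros. lra. apply Rplus_le_compat; auto. Qed.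
Lemma fsum_plus n f g : fsum n (fun j => f j + g j) = fsum n f + fsum n g.
Proof. rewrite <- (Rmult_1_l (fsum n f)), <- (Rmult_1_l (fsum n g)), <- fsum_lin. apply fsum_ext; intros; ring. Qed.
Lemma fsum_scal n a f : fsum n (fun j => a * f j) = a * fsum n f.
Proof. replace (a * fsum n f) with (a * fsum n f + 0 * fsum n f) by ring. rewrite <- fsum_lin. apply fsum_ext; intros; ring. Qed.
Lemma fsum_zero n f : (forall j, (j < n)%nat -> f j = 0) -> fsum n f = 0.
Proof. induction n; simpl; intros; auto. rewrite IHn, H; auto; ring. Qed.
Lemma fsum_sq0 n f : fsum n (fun j => f j ^ 2) <= 0 -> forall j, (j < n)%nat -> f j = 0.
Proof.
  assert (Hp : forall n, 0 <= fsum n (fun j => f j ^ 2)).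
  { intro p; induction p; cbn [fsum]. lra. assert (0 <= f p ^ 2) by nra. lra. }
  induction n; cbn [fsum]; intros H j Hj. lia.
  specialize (Hp n). assert (0 <= f n ^ 2) by nra.
  destruct (Nat.eq_dec j n). subst. nra. apply IHn; [lra|lia].
Qed.

Lemma Ladj_c0 m u c n : (forall j, (j < m)%nat -> in_c0 (u j)) -> (n <= m)%nat -> in_c0 (Ladj n u c).
Proof.
  intros H. induction n; intros Hn; unfold in_c0, Ladj; simpl.
  apply is_lim_seq_const.
  replace (Finite 0) with (Finite (0 + c n * 0)) by (f_equal; ring).
  apply is_lim_seq_plus'. apply IHn; lia.
  apply (is_lim_seq_scal_l _ _ 0). apply H; lia.
Qed.

Lemma interchange m u c x n : (forall j, (j < m)%nat -> in_c0 (u j)) -> in_l1 x -> (n <= m)%nat ->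
  fsum n (fun j => c j * Lop m u x j) = Series (fun k => Ladj n u c k * x k).
Proof.
  intros H Hx. induction n; intros Hn; simpl.
  transitivity (Series (fun _ => 0)); [|apply Series_ext; intro; unfold Ladj; simpl; ring]. symmetry; apply Series_zero.
  rewrite IHn by lia. unfold Lop, inner. rewrite <- Series_scal_l, <- Series_plus.
  apply Series_ext; intro; unfold Ladj; simpl; ring.
  apply c0_l1_ex; auto. apply (Ladj_c0 m); auto; lia.
  apply ex_series_scalR, c0_l1_ex; auto; apply H; lia.
Qed.

Lemma Ladj_opp m u c k : Ladj m u (fun j => - c j) k = - Ladj m u c k.
Proof. unfold Ladj. replace (- fsum m (fun j => c j * u j k)) with (-1 * fsum m (fun j => c j * u j k)) by ring.
  rewrite <- fsum_scal. apply fsum_ext; intros; ring. Qed.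

Lemma Lop_comb m u a x b z j : (forall j, (j < m)%nat -> in_c0 (u j)) -> in_l1 x -> in_l1 z -> (j < m)%nat ->
  Lop m u (fun k => a * x k + b * z k) j = a * Lop m u x j + b * Lop m u z j.
Proof. intros. unfold Lop. apply inner_comb; auto. Qed.

Lemma extension m u y (phi : seqR -> R) (lam : R) :
  (forall j, (j<m)%nat -> in_c0 (u j)) ->
  (forall a x b z, 0 < a -> 0 < b -> in_l1 x -> in_l1 z ->
     phi (fun k => a * x k + b * z k) <= a * phi x + b * phi z) ->
  (forall x t, in_l1 x -> (forall j, (j<m)%nat -> Lop m u x j = t * y j) -> lam * t <= phi x) ->
  forall i, (i <= m)%nat -> exists c : nat -> R, forall x t, in_l1 x ->
    (forall j, (i <= j)%nat -> (j < m)%nat -> Lop m u x j = t * y j) ->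
    lam * t + fsum i (fun j => c j * (Lop m u x j - t * y j)) <= phi x.
Proof.
  intros Hu Hphi Hbase. induction i; intros Hi.
  - exists (fun _ => 0). intros x t Hx Ha. simpl. rewrite Rplus_0_r. apply Hbase; auto.
    intros; apply Ha; auto; lia.
  - destruct IHi as [c Hc]; [lia|].
    set (F := fun x t => lam * t + fsum i (fun j => c j * (Lop m u x j - t * y j))).
    set (d := fun x t => Lop m u x i - t * y i).
    set (adm := fun x t => forall j, (S i <= j)%nat -> (j < m)%nat -> Lop m u x j = t * y j).
    assert (Fcomb : forall a x1 t1 b x2 t2, in_l1 x1 -> in_l1 x2 ->
      F (fun k => a * x1 k + b * x2 k) (a * t1 + b * t2) = a * F x1 t1 + b * F x2 t2).
    { intros. unfold F.
      rewrite (fsum_ext i _ (fun j => a * (c j * (Lop m u x1 j - t1 * y j)) + b * (c j * (Lop m u x2 j - t2 * y j)))).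
      rewrite fsum_lin. ring. intros j Hj. rewrite Lop_comb; auto; try lia. ring. }
    assert (dcomb : forall a x1 t1 b x2 t2, in_l1 x1 -> in_l1 x2 ->
      d (fun k => a * x1 k + b * x2 k) (a * t1 + b * t2) = a * d x1 t1 + b * d x2 t2).
    { intros. unfold d. rewrite Lop_comb; auto; try lia. ring. }
    assert (admcomb : forall a x1 t1 b x2 t2, in_l1 x1 -> in_l1 x2 -> adm x1 t1 -> adm x2 t2 ->
      adm (fun k => a * x1 k + b * x2 k) (a * t1 + b * t2)).
    { intros a x1 t1 b x2 t2 H1 H2 A1 A2 j Hj1 Hj2. rewrite Lop_comb; auto. rewrite A1, A2; auto. ring. }
    assert (K : forall x1 t1 x2 t2, in_l1 x1 -> in_l1 x2 -> adm x1 t1 -> adm x2 t2 ->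
      0 < d x1 t1 -> d x2 t2 < 0 ->
      d x1 t1 * (F x2 t2 - phi x2) <= (- d x2 t2) * (phi x1 - F x1 t1)).
    { intros x1 t1 x2 t2 H1 H2 A1 A2 D1 D2.
      set (a := - d x2 t2). set (b := d x1 t1).
      assert (Hl : in_l1 (fun k => a * x1 k + b * x2 k)) by (apply l1_comb; auto).
      assert (HF := Hc _ (a * t1 + b * t2) Hl).
      fold (F (fun k => a * x1 k + b * x2 k) (a * t1 + b * t2)) in HF.
      rewrite Fcomb in HF; auto.
      assert (Hp := Hphi a x1 b x2 ltac:(unfold a; lra) D1 H1 H2).
      cut (a * F x1 t1 + b * F x2 t2 <= phi (fun k => a * x1 k + b * x2 k)). intro; lra.
      apply HF. intros j Hj1 Hj2. destruct (Nat.eq_dec j i).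
      + subst j. assert (Hd := dcomb a x1 t1 b x2 t2 H1 H2). unfold d in Hd |- *.
        assert (a * (Lop m u x1 i - t1 * y i) + b * (Lop m u x2 i - t2 * y i) = 0).
        { unfold a, b, d. ring. }
        lra.
      + apply admcomb; auto. lia. }
    assert (Ha : exists a, (forall x t, in_l1 x -> adm x t -> 0 < d x t -> a * d x t <= phi x - F x t) /\
                           (forall x t, in_l1 x -> adm x t -> d x t < 0 -> F x t - phi x <= a * (- d x t))).
    { destruct (classic (exists x1 t1, in_l1 x1 /\ adm x1 t1 /\ 0 < d x1 t1)) as [[x1 [t1 [H1 [A1 D1]]]] | Hno].
      - set (E := fun r => exists x t, in_l1 x /\ adm x t /\ d x t < 0 /\ r = (F x t - phi x) / (- d x t)).
        assert (Eub : forall x1 t1 r, in_l1 x1 -> adm x1 t1 -> 0 < d x1 t1 -> E r -> r <= (phi x1 - F x1 t1) / d x1 t1).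
        { intros z1 s1 r Z1 S1 P1 [x2 [t2 [H2 [A2 [D2 ->]]]]].
          assert (HK := K z1 s1 x2 t2 Z1 H2 S1 A2 P1 D2).
          set (q1 := (F x2 t2 - phi x2) / - d x2 t2). set (q2 := (phi z1 - F z1 s1) / d z1 s1).
          assert (e1 : q1 * (- d x2 t2) = F x2 t2 - phi x2) by (unfold q1; field; lra).
          assert (e2 : q2 * d z1 s1 = phi z1 - F z1 s1) by (unfold q2; field; lra).
          assert (0 < d z1 s1 * (- d x2 t2)) by nra. nra. }
        assert (Hb : bound E). { exists ((phi x1 - F x1 t1) / d x1 t1). intros r Hr. apply Eub; auto. }
        assert (Hne : exists r, E r).
        { exists ((F (fun k => -1 * x1 k + 0 * x1 k) (-1 * t1 + 0 * t1) - phi (fun k => -1 * x1 k + 0 * x1 k))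
                  / (- d (fun k => -1 * x1 k + 0 * x1 k) (-1 * t1 + 0 * t1))).
          exists (fun k => -1 * x1 k + 0 * x1 k), (-1 * t1 + 0 * t1). split; [apply l1_comb; auto|].
          split; [apply admcomb; auto|]. split; [rewrite dcomb; auto; lra| reflexivity]. }
        destruct (completeness E Hb Hne) as [a [Hub Hlub]].
        exists a. split.
        + intros x t Hx Ax Dx. assert (a <= (phi x - F x t) / d x t).
          { apply Hlub. intros r Hr. apply Eub; auto. }
          assert (e2 : (phi x - F x t) / d x t * d x t = phi x - F x t) by (field; lra). nra.
        + intros x t Hx Ax Dx. assert ((F x t - phi x) / (- d x t) <= a).
          { apply Hub. exists x, t. auto. }
          assert (e2 : (F x t - phi x) / (- d x t) * (- d x t) = F x t - phi x) by (field; lra). nra.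
      - exists 0. split.
        + intros x t Hx Ax Dx. exfalso. apply Hno. exists x, t. auto.
        + intros x t Hx Ax Dx. exfalso. apply Hno.
          exists (fun k => -1 * x k + 0 * x k), (-1 * t + 0 * t). split; [apply l1_comb; auto|].
          split; [apply admcomb; auto|]. rewrite dcomb; auto; lra. }
    destruct Ha as [a [Hpos Hneg]].
    exists (fun j => if Nat.eqb j i then a else c j).
    intros x t Hx Ax. cbn [fsum]. rewrite Nat.eqb_refl.
    rewrite (fsum_ext i _ (fun j => c j * (Lop m u x j - t * y j))).
    2:{ intros j Hj. destruct (Nat.eqb_spec j i); [lia|reflexivity]. }
    assert (Ax' : adm x t). { intros j Hj1 Hj2. apply Ax; auto. }
    fold (d x t). rewrite <- Rplus_assoc. fold (F x t).
    destruct (total_order_T (d x t) 0) as [[Dn|D0]|Dp].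
    + specialize (Hneg x t Hx Ax' Dn). lra.
    + rewrite D0, Rmult_0_r, Rplus_0_r. unfold F. apply Hc; auto.
      intros j Hj1 Hj2. destruct (Nat.eq_dec j i). subst j. unfold d in D0. lra. apply Ax; lia.
    + specialize (Hpos x t Hx Ax' Dp). lra.
Qed.

Lemma norm_inf_ub g B : (forall k, Rabs (g k) <= B) ->
  (forall k, Rabs (g k) <= norm_inf g) /\ norm_inf g <= B.
Proof.
  intro H. unfold norm_inf.
  assert (Hc := Sup_seq_correct (fun j => Finite (Rabs (g j)))).
  assert (Hm : forall k, Rbar_le (Rabs (g k)) (Sup_seq (fun j => Finite (Rabs (g j))))).
  { intro k. apply Sup_seq_minor_le with k. simpl. lra. }
  destruct (Sup_seq (fun j => Finite (Rabs (g j)))) as [l| |] eqn:E; simpl in Hc |- *.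
  - split. intro k; specialize (Hm k); simpl in Hm; exact Hm.
    destruct (Rle_dec l B) as [|Hn]; auto. exfalso.
    assert (Hp : 0 < l - B) by lra. destruct (Hc (mkposreal _ Hp)) as [_ [n Hn']]. simpl in Hn'.
    specialize (H n). lra.
  - exfalso. destruct (Hc B) as [n Hn]. simpl in Hn. specialize (H n); lra.
  - exfalso. specialize (Hc 0 0%nat). simpl in Hc. assert (0 <= Rabs (g 0%nat)) by apply Rabs_pos. lra.
Qed.

Lemma norm_inf_one g : norm_inf g = 1 -> forall k, Rabs (g k) <= 1.
Proof.
  unfold norm_inf. intros H k.
  assert (Hm : Rbar_le (Rabs (g k)) (Sup_seq (fun j => Finite (Rabs (g j))))).
  { apply Sup_seq_minor_le with k. simpl. lra. }
  destruct (Sup_seq (fun j => Finite (Rabs (g j)))) as [l| |]; simpl in H, Hm; try lra.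
Qed.

Lemma Rabs_zero_eq a : Rabs a <= 0 -> a = 0.
Proof. intro H. destruct (Req_dec a 0); auto. assert (0 < Rabs a) by (apply Rabs_pos_lt; auto). lra. Qed.

Lemma trunc_ev g : in_c0 g -> exists N, forall k, (N <= k)%nat -> trunc g k = 0.
Proof.
  intro H. destruct (Rle_dec (norm_inf g) 0) as [Hle|Hgt].
  - exists 0%nat. intros k _. unfold trunc. destruct (Req_EM_T (Rabs (g k)) (norm_inf g)); auto.
    apply Rabs_zero_eq. lra.
  - destruct (c0_eventually g (norm_inf g) H) as [N HN]; [lra|]. exists N. intros k Hk.
    unfold trunc. destruct (Req_EM_T (Rabs (g k)) (norm_inf g)); auto. specialize (HN k Hk). lra.
Qed.

Lemma ex_series_ev0 (f : nat -> R) N : (forall k, (N <= k)%nat -> f k = 0) -> ex_series f.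
Proof. intro H. apply ex_series_shift with N. apply (ex_series_extR (fun _ => 0)).
  intro n; rewrite H; auto; lia. apply ex_series_zero. Qed.

Lemma sq_l1 a : in_l1 a -> ex_series (fun k => a k ^ 2).
Proof.
  intro H. apply ex_series_R_le with (fun k => norm1 a * Rabs (a k)).
  intro n. assert (Hn : Rabs (a n) <= norm1 a) by (apply (term_le_Series (fun k => Rabs (a k))); auto; intro; apply Rabs_pos).
  assert (0 <= Rabs (a n)) by apply Rabs_pos.
  rewrite Rabs_right by nra. replace (a n ^ 2) with (Rabs (a n) * Rabs (a n)).
  nra. rewrite <- Rabs_mult. rewrite Rabs_right by nra. ring.
  apply ex_series_scalR; auto.
Qed.

Lemma scalar_sign s x : (forall t, 0 <= s * t + t ^ 2 / 2 + Rabs (x + t) - Rabs x) ->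
  Rabs s <= 1 /\ s * x = - Rabs x.
Proof.
  intro H.
  assert (Hs : Rabs s <= 1).
  { apply Rabs_le. split.
    - destruct (Rle_dec (-1) s) as [|Hn]; auto. exfalso.
      specialize (H (- (s + 1))). assert (Rabs (x + - (s+1)) <= Rabs x + Rabs (- (s+1))) by apply Rabs_triang.
      rewrite (Rabs_right (- (s+1))) in H0 by lra. nra.
    - destruct (Rle_dec s 1) as [|Hn]; auto. exfalso.
      specialize (H (- (s - 1))). assert (Rabs (x + - (s-1)) <= Rabs x + Rabs (- (s-1))) by apply Rabs_triang.
      rewrite (Rabs_left (- (s-1))) in H0 by lra. nra. }
  split; auto. apply Rabs_le_between in Hs.
  destruct (total_order_T x 0) as [[Hx|Hx]|Hx].
  - rewrite Rabs_left by lra. destruct (Req_dec s 1). subst; ring. exfalso.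
    set (t := Rmin (- x) (1 - s)).
    assert (t <= - x) by apply Rmin_l. assert (t <= 1 - s) by apply Rmin_r.
    assert (0 < t) by (apply Rmin_glb_lt; lra).
    specialize (H t). rewrite (Rabs_left x), (Rabs_left1 (x + t)) in H by lra. nra.
  - subst. rewrite Rabs_R0. ring.
  - rewrite Rabs_right by lra. destruct (Req_dec s (-1)). subst; ring. exfalso.
    set (t := Rmin x (s + 1)).
    assert (t <= x) by apply Rmin_l. assert (t <= s + 1) by apply Rmin_r.
    assert (0 < t) by (apply Rmin_glb_lt; lra).
    specialize (H (- t)). rewrite (Rabs_right x), (Rabs_right (x + - t)) in H by lra. nra.
Qed.

Lemma point_ineq s x w : Rabs s <= 1 -> s * x = - Rabs x ->
  / 2 * ((x - s) - x) ^ 2 + Rabs x <= / 2 * ((x - s) - w) ^ 2 + Rabs w.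
Proof.
  intros H1 H2. assert (Rabs (s * w) <= Rabs w).
  { rewrite Rabs_mult. assert (0 <= Rabs w) by apply Rabs_pos. assert (0 <= Rabs s) by apply Rabs_pos. nra. }
  assert (-(s*w) <= Rabs (s*w)) by (rewrite <- Rabs_Ropp; apply Rle_abs).
  assert (E : / 2 * ((x - s) - w) ^ 2 + Rabs w - (/ 2 * ((x - s) - x) ^ 2 + Rabs x) =
     / 2 * (x - w) ^ 2 + (s * w + Rabs w) + (- (s * x) - Rabs x)) by field.
  assert (0 <= (x - w) ^ 2) by apply pow2_ge_0. lra.
Qed.

Lemma trunc_facts g xh : (forall k, Rabs (g k) <= 1) -> (forall k, g k * xh k = - Rabs (xh k)) ->
  forall k, Rabs (trunc g k) <= 1 /\ trunc g k * xh k = - Rabs (xh k).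
Proof.
  intros H1 H2 k. destruct (norm_inf_ub g 1 H1) as [Hub Hle].
  unfold trunc. destruct (Req_EM_T (Rabs (g k)) (norm_inf g)) as [E|E]; auto.
  destruct (Req_dec (xh k) 0) as [Z|Z].
  - rewrite Z, Rabs_R0. split; [lra| ring].
  - exfalso. apply E. specialize (H2 k). specialize (Hub k).
    assert (Rabs (g k) * Rabs (xh k) = Rabs (xh k)).
    { rewrite <- Rabs_mult, H2, Rabs_Ropp, Rabs_Rabsolu. auto. }
    assert (0 < Rabs (xh k)) by (apply Rabs_pos_lt; auto).
    assert (Rabs (g k) = 1) by nra. specialize (H1 k). lra.
Qed.

Lemma prox_l1_suff xh s : in_l1 xh -> (exists N, forall k, (N <= k)%nat -> s k = 0) ->
  (forall k, Rabs (s k) <= 1 /\ s k * xh k = - Rabs (xh k)) ->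
  is_prox_l1 (fun k => xh k - s k) xh.
Proof.
  intros Hxh [N HN] Hs. split; auto. intros w Hw. unfold norm2sq, norm1.
  assert (EA : ex_series (fun j => ((xh j - s j) - xh j) ^ 2)).
  { apply ex_series_ev0 with N. intros k Hk. rewrite HN; auto. ring. }
  assert (EB : ex_series (fun j => ((xh j - s j) - w j) ^ 2)).
  { apply ex_series_R_le with (fun j => 2 * (1 * xh j + (-1) * w j) ^ 2 + 2 * s j ^ 2).
    intro n. rewrite Rabs_right by (apply Rle_ge, pow2_ge_0).
    assert (2 * (1 * xh n + (-1) * w n) ^ 2 + 2 * s n ^ 2 - ((xh n - s n) - w n) ^ 2 = (xh n - w n + s n) ^ 2) by ring.
    assert (0 <= (xh n - w n + s n) ^ 2) by apply pow2_ge_0. lra.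
    apply ex_series_plusR; apply ex_series_scalR. apply sq_l1, l1_comb; auto.
    apply ex_series_ev0 with N. intros k Hk; rewrite HN; auto; ring. }
  rewrite <- !Series_scal_l, <- !Series_plus; auto; try (apply ex_series_scalR; auto).
  apply Series_le. intro n. split.
  assert (0 <= ((xh n - s n) - xh n) ^ 2) by apply pow2_ge_0. assert (0 <= Rabs (xh n)) by apply Rabs_pos. lra.
  destruct (Hs n). apply point_ineq; auto.
  apply ex_series_plusR; auto. apply ex_series_scalR; auto.
Qed.

Lemma prox_l1_nec xh s : in_l1 xh -> (exists N, forall k, (N <= k)%nat -> s k = 0) ->
  is_prox_l1 (fun k => xh k - s k) xh ->
  forall k, Rabs (s k) <= 1 /\ s k * xh k = - Rabs (xh k).
Proof.
  intros Hxh [N HN] [_ Hmin] k. apply scalar_sign. intro t.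
  assert (Hw : in_l1 (fun j => xh j + bump k t j)).
  { unfold in_l1. apply ex_series_R_le with (fun j => Rabs (xh j) + Rabs (bump k t j)).
    intro n; rewrite Rabs_Rabsolu; apply Rabs_triang. apply ex_series_plusR; auto. apply l1_bump. }
  specialize (Hmin _ Hw). unfold norm2sq, norm1 in Hmin.
  assert (EA : ex_series (fun j => ((xh j - s j) - xh j) ^ 2)).
  { apply ex_series_ev0 with N. intros j Hj. rewrite HN; auto. ring. }
  rewrite (Series_ext (fun j => ((xh j - s j) - (xh j + bump k t j)) ^ 2)
             (fun j => ((xh j - s j) - xh j) ^ 2 + bump k (2 * s k * t + t ^ 2) j)) in Hmin.
  2:{ intro n. unfold bump. destruct (Nat.eqb_spec n k). subst; ring. ring. }
  rewrite (Series_ext (fun j => Rabs (xh j + bump k t j))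
             (fun j => Rabs (xh j) + bump k (Rabs (xh k + t) - Rabs (xh k)) j)) in Hmin.
  2:{ intro n. unfold bump. destruct (Nat.eqb_spec n k). subst; ring. rewrite Rplus_0_r; ring. }
  rewrite !Series_plus, !Series_bump in Hmin; auto; try apply ex_series_bump.
  lra.
Qed.

Lemma prox_Rm_iff m y L c :
  is_prox_Rm m (iota_y_conj m y) (fun j => c j + L j) c <-> eqRm m L y.
Proof.
  unfold is_prox_Rm, iota_y_conj, eqRm. split.
  - intro H. specialize (H (fun j => c j + L j - y j)).
    assert (fsum m (fun j => (L j - y j) ^ 2) <= 0).
    { rewrite <- (Rmult_1_l (fsum m (fun j => y j * c j))) in H.
      rewrite <- (Rmult_1_l (fsum m (fun j => y j * (c j + L j - y j)))) in H.
      rewrite <- !fsum_lin in H.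
      assert (fsum m (fun j => (L j - y j) ^ 2) =
        2 * fsum m (fun j => / 2 * (c j + L j - c j) ^ 2 + 1 * (y j * c j))
        + (-2) * fsum m (fun j => / 2 * (c j + L j - (c j + L j - y j)) ^ 2 + 1 * (y j * (c j + L j - y j)))).
      { rewrite <- fsum_lin. apply fsum_ext. intros; field. }
      lra. }
    intros j Hj. assert (L j - y j = 0) by (apply (fsum_sq0 m (fun j => L j - y j)); auto). lra.
  - intros H d. rewrite <- (Rmult_1_l (fsum m (fun j => y j * c j))).
    rewrite <- (Rmult_1_l (fsum m (fun j => y j * d j))). rewrite <- !fsum_lin.
    apply fsum_le. intros j Hj. rewrite H by auto.
    assert (E : / 2 * (c j + y j - d j) ^ 2 + 1 * (y j * d j) - (/ 2 * (c j + y j - c j) ^ 2 + 1 * (y j * c j))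
               = / 2 * (c j - d j) ^ 2) by field.
    assert (0 <= (c j - d j) ^ 2) by apply pow2_ge_0. lra.
Qed.

Lemma objective_fin m u y x : eqRm m (Lop m u x) y -> objective m u y x = Finite (norm1 x).
Proof. intro H. unfold objective, iota_y. destruct (excluded_middle_informative _) as [|n]; [|contradiction].
  simpl. rewrite Rplus_0_r. reflexivity. Qed.
Lemma objective_inf m u y x : ~ eqRm m (Lop m u x) y -> objective m u y x = p_infty.
Proof. intro H. unfold objective, iota_y. destruct (excluded_middle_informative _) as [|n]; [contradiction|].
  reflexivity. Qed.

Lemma comb_scal t (x : seqR) : (fun k => / t * x k + 0 * x k) = (fun k => / t * x k).
Proof. apply functional_extensionality. intro; ring. Qed.

Theorem mainTheorem15 (m : nat) (u : nat -> seqR) (y : nat -> R) (xh : seqR) :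
  (forall j, (j < m)%nat -> in_c0 (u j)) ->
  lin_indep m u ->
  in_l1 xh ->
  (is_solution m u y xh <->
   exists c : nat -> R,
     is_prox_Rm m (iota_y_conj m y) (fun j => c j + Lop m u xh j) c /\
     is_prox_l1 (fun k => xh k - trunc (Ladj m u c) k) xh).
Proof.
  intros Hu Hind Hxh.
  assert (Lscal : forall x t j, in_l1 x -> (j < m)%nat -> Lop m u (fun k => / t * x k + 0 * x k) j = / t * Lop m u x j).
  { intros. rewrite Lop_comb; auto. ring. }
  split.
  - intros [_ Hmin].
    assert (Hfeas : eqRm m (Lop m u xh) y).
    { destruct (classic (eqRm m (Lop m u xh) y)) as [|Hn]; auto. exfalso.
      destruct (extension m u y (fun _ => 0) 1 Hu) with (i := m) as [c Hc]; auto.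
      + intros; lra.
      + intros x t Hx HL. destruct (Rle_dec t 0); [lra|]. exfalso.
        assert (Hz : in_l1 (fun k => / t * x k + 0 * x k)) by (apply l1_comb; auto).
        specialize (Hmin _ Hz). rewrite objective_inf in Hmin by auto.
        rewrite objective_fin in Hmin. simpl in Hmin. auto.
        intros j Hj. rewrite Lscal, HL by auto. field. lra.
      + assert (Hc' : forall x t, in_l1 x -> 1 * t + fsum m (fun j => c j * (Lop m u x j - t * y j)) <= 0).
        { intros. apply Hc; auto. intros; lia. }
        assert (HY : fsum m (fun j => c j * y j) = 1).
        { assert (A1 := Hc' (fun _ => 0) 1 l1_zero). assert (A2 := Hc' (fun _ => 0) (-1) l1_zero).
          unfold Lop in A1, A2. rewrite (fsum_ext m _ (fun j => -1 * (c j * y j) + 0 * (c j * y j))) in A1.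
          rewrite (fsum_ext m _ (fun j => 1 * (c j * y j) + 0 * (c j * y j))) in A2.
          rewrite fsum_lin in A1, A2. lra.
          intros; rewrite inner_zero; ring. intros; rewrite inner_zero; ring. }
        assert (HG : forall k, Ladj m u c k = 0).
        { intro k. assert (A1 := Hc' (bump k 1) 0 (l1_bump k 1)). assert (A2 := Hc' (bump k (-1)) 0 (l1_bump k (-1))).
          unfold Lop in A1, A2. unfold Ladj.
          rewrite (fsum_ext m _ (fun j => 1 * (c j * u j k) + 0 * (c j * u j k))) in A1.
          rewrite (fsum_ext m _ (fun j => -1 * (c j * u j k) + 0 * (c j * u j k))) in A2.
          rewrite fsum_lin in A1, A2. lra.
          intros; rewrite inner_bump; ring. intros; rewrite inner_bump; ring. }
        assert (fsum m (fun j => c j * y j) = 0).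
        { apply fsum_zero. intros j Hj. rewrite (Hind c HG j Hj). ring. }
        lra. }
    set (N := norm1 xh).
    assert (HN : forall x, in_l1 x -> eqRm m (Lop m u x) y -> N <= norm1 x).
    { intros x Hx Hxy. specialize (Hmin x Hx). rewrite !objective_fin in Hmin by auto. exact Hmin. }
    destruct (extension m u y norm1 N Hu) with (i := m) as [c Hc]; auto.
    + intros. apply norm1_comb_le; auto; lra.
    + intros x t Hx HL. destruct (Rle_dec t 0).
      * assert (0 <= N) by (apply norm1_nonneg; auto). assert (0 <= norm1 x) by (apply norm1_nonneg; auto). nra.
      * assert (Hz : in_l1 (fun k => / t * x k + 0 * x k)) by (apply l1_comb; auto).
        assert (H1 : N <= norm1 (fun k => / t * x k + 0 * x k)).
        { apply HN; auto. intros j Hj. rewrite Lscal, HL by auto. field. lra. }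
        rewrite comb_scal, norm1_scal, Rabs_right in H1.
        apply Rmult_le_reg_r with (/ t). apply Rinv_0_lt_compat; lra.
        replace (N * t * / t) with N by (field; lra). rewrite Rmult_comm. exact H1.
        apply Rle_ge, Rlt_le, Rinv_0_lt_compat; lra.
    + assert (Hc' : forall x t, in_l1 x -> N * t + fsum m (fun j => c j * (Lop m u x j - t * y j)) <= norm1 x).
      { intros. apply Hc; auto. intros; lia. }
      assert (HY : fsum m (fun j => c j * y j) = N).
      { assert (A1 := Hc' (fun _ => 0) 1 l1_zero). assert (A2 := Hc' (fun _ => 0) (-1) l1_zero).
        rewrite norm1_zero in A1, A2.
        unfold Lop in A1, A2. rewrite (fsum_ext m _ (fun j => -1 * (c j * y j) + 0 * (c j * y j))) in A1.
        rewrite (fsum_ext m _ (fun j => 1 * (c j * y j) + 0 * (c j * y j))) in A2.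
        rewrite fsum_lin in A1, A2. lra.
        intros; rewrite inner_zero; ring. intros; rewrite inner_zero; ring. }
      assert (HG : forall k, Rabs (Ladj m u c k) <= 1).
      { intro k. assert (A1 := Hc' (bump k 1) 0 (l1_bump k 1)). assert (A2 := Hc' (bump k (-1)) 0 (l1_bump k (-1))).
        rewrite norm1_bump in A1, A2.
        unfold Lop in A1, A2. unfold Ladj.
        rewrite (fsum_ext m _ (fun j => 1 * (c j * u j k) + 0 * (c j * u j k))) in A1.
        rewrite (fsum_ext m _ (fun j => -1 * (c j * u j k) + 0 * (c j * u j k))) in A2.
        rewrite fsum_lin in A1, A2. rewrite Rabs_R1 in A1. rewrite Rabs_m1 in A2. apply Rabs_le. lra.
        intros; rewrite inner_bump; ring. intros; rewrite inner_bump; ring. }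
      set (G := Ladj m u c).
      assert (HS : Series (fun k => G k * xh k) = N).
      { unfold G. rewrite <- (interchange m u c xh m); auto. rewrite <- HY. apply fsum_ext. intros j Hj. rewrite Hfeas; auto. }
      assert (Hex : ex_series (fun k => G k * xh k)) by (apply c0_l1_ex; auto; apply (Ladj_c0 m); auto).
      assert (Hterm : forall k, G k * xh k = Rabs (xh k)).
      { intro k. set (a := fun k => Rabs (xh k) - G k * xh k).
        assert (Ha : forall k, 0 <= a k).
        { intro j. unfold a. assert (Rabs (G j * xh j) <= Rabs (xh j)).
          { rewrite Rabs_mult. specialize (HG j). assert (0 <= Rabs (xh j)) by apply Rabs_pos. fold G in HG. nra. }
          assert (G j * xh j <= Rabs (G j * xh j)) by apply Rle_abs. lra. }
        assert (Hea : ex_series a) by (apply ex_series_minusR; auto).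
        assert (Series a = 0). { unfold a. rewrite Series_minus; auto. rewrite HS. unfold N, norm1. ring. }
        assert (a k <= Series a) by (apply term_le_Series; auto).
        specialize (Ha k). unfold a in *. lra. }
      exists (fun j => - c j). split.
      * apply prox_Rm_iff. auto.
      * apply prox_l1_suff; auto.
        -- apply trunc_ev. apply (Ladj_c0 m); auto.
        -- apply trunc_facts.
           intro k. rewrite Ladj_opp, Rabs_Ropp. apply HG.
           intro k. rewrite Ladj_opp. fold G. rewrite <- Hterm. ring.
  - intros [c [HRm Hl1]].
    apply prox_Rm_iff in HRm.
    set (g := Ladj m u c) in *. set (s := trunc g) in *.
    assert (Hg0 : in_c0 g) by (apply (Ladj_c0 m); auto).
    assert (Hs := prox_l1_nec xh s Hxh (trunc_ev g Hg0) Hl1).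
    split; auto. intros x Hx.
    rewrite objective_fin by auto.
    destruct (classic (eqRm m (Lop m u x) y)) as [Hxy|Hn].
    2:{ rewrite objective_inf by auto. simpl. auto. }
    rewrite objective_fin by auto. simpl.
    destruct (classic (exists k, xh k <> 0)) as [[k0 Hk0]|Hno].
    + assert (Hk : s k0 = g k0 /\ Rabs (g k0) = norm_inf g).
      { unfold s, trunc. destruct (Req_EM_T (Rabs (g k0)) (norm_inf g)); auto.
        exfalso. destruct (Hs k0) as [_ H2]. unfold s, trunc in H2.
        destruct (Req_EM_T (Rabs (g k0)) (norm_inf g)); [contradiction|].
        assert (0 < Rabs (xh k0)) by (apply Rabs_pos_lt; auto). lra. }
      destruct Hk as [Hk1 Hk2].
      assert (Hn1 : norm_inf g = 1).
      { destruct (Hs k0) as [H1 H2]. rewrite <- Hk2, <- Hk1.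
        assert (Rabs (s k0) * Rabs (xh k0) = Rabs (xh k0)).
        { rewrite <- Rabs_mult, H2, Rabs_Ropp, Rabs_Rabsolu. auto. }
        assert (0 < Rabs (xh k0)) by (apply Rabs_pos_lt; auto). nra. }
      assert (Hgb := norm_inf_one g Hn1).
      assert (Hgx : forall j, g j * xh j = - Rabs (xh j)).
      { intro j. destruct (Req_dec (xh j) 0) as [Z|Z]. rewrite Z, Rabs_R0; ring.
        destruct (Hs j) as [_ H2]. unfold s, trunc in H2.
        destruct (Req_EM_T (Rabs (g j)) (norm_inf g)); auto.
        assert (0 < Rabs (xh j)) by (apply Rabs_pos_lt; auto). lra. }
      assert (E1 : Series (fun k => g k * xh k) = Series (fun k => g k * x k)).
      { unfold g. rewrite <- (interchange m u c xh m), <- (interchange m u c x m); auto. apply fsum_ext. intros j Hj. rewrite HRm, Hxy; auto. }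
      rewrite (Series_ext _ (fun k => -1 * Rabs (xh k))) in E1 by (intro; rewrite Hgx; ring).
      rewrite Series_scal_l in E1.
      assert (Hex : ex_series (fun k => g k * x k)) by (apply c0_l1_ex; auto).
      assert (0 <= Series (fun k => Rabs (x k) + g k * x k)).
      { apply Series_nonneg. intro j. specialize (Hgb j).
        assert (Rabs (g j * x j) <= Rabs (x j)).
        { rewrite Rabs_mult. assert (0 <= Rabs (x j)) by apply Rabs_pos. nra. }
        assert (-(g j * x j) <= Rabs (g j * x j)) by (rewrite <- Rabs_Ropp; apply Rle_abs). lra.
        apply ex_series_plusR; auto. }
      rewrite Series_plus in H; auto. unfold norm1. lra.
    + assert (norm1 xh = 0).
      { unfold norm1. transitivity (Series (fun _ => 0)); [|apply Series_zero].
        apply Series_ext. intro j. destruct (Req_dec (xh j) 0) as [Z|Z]. rewrite Z; apply Rabs_R0.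
        exfalso; apply Hno; exists j; auto. }
      assert (0 <= norm1 x) by (apply norm1_nonneg; auto). lra.
Qed.
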